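(* Let $(X_{a,s})_{s\ge1}$ be i.i.d. random variables with values in $[0,1]$ and mean $\mu_a$, and let $\mu_1$ satisfy $\mu_a<\mu_1<1$. For $\epsilon>0$ and an integer $n\ge3$ let \[K_n=\left\lfloor\frac{1+\epsilon}{d(\mu_a,\mu_1)}\big(\log(n)+3\log(\log(n))\big)\right\rfloor.\] Then for each $\epsilon>0$ there exist $C_2(\epsilon)>0$ and $\beta(\epsilon)>0$ (depending also on $\mu_a,\mu_1$) such that for all $n\ge3$, \[\sum_{s=K_n+1}^\infty\mathbb{P}\left(d^+(\hat\mu_{a,s},\mu_1)<\frac{d(\mu_a,\mu_1)}{1+\epsilon}\right)\le\frac{C_2(\epsilon)}{n^{\beta(\epsilon)}}.\]
   Context: $\hat\mu_{a,s}=(X_{a,1}+\dots+X_{a,s})/s$. $d(p,q)=p\log\frac pq+(1-p)\log\frac{1-p}{1-q}$ for $p,q\in[0,1]$ (conventions $0\log0=0\log(0/0)=0$, $x\log(x/0)=+\infty$ for $x>0$), and $d^+(x,y)=d(x,y)\mathbb{1}\{x<y\}$. *)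

(* Defs.v *)
From HB Require Import structures.
From mathcomp Require Import all_boot all_order all_algebra.
From mathcomp Require Import all_classical all_reals all_analysis.
Set Implicit Arguments. Unset Strict Implicit. Unset Printing Implicit Defensive.
Import Order.TTheory GRing.Theory Num.Theory.
Local Open Scope classical_set_scope.
Local Open Scope ring_scope.

Definition xlogxy {R : realType} (x y : R) : \bar R :=
  if x == 0 then 0%E else if y == 0 then +oo%E else (x * ln (x / y))%:E.

Definition kl {R : realType} (p q : R) : \bar R :=
  (xlogxy p q + xlogxy (1 - p) (1 - q))%E.

Definition klplus {R : realType} (x y : R) : \bar R :=
  if x < y then kl x y else 0%E.

(* empirical mean of the first s samples X 0, ..., X (s-1)
   (i.e. X_{a,1}, ..., X_{a,s} in the paper's 1-based indexing) *)
Definition emp_mean {R : realType} {T : Type} (X : nat -> T -> R) (s : nat) (w : T) : R :=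
  (\sum_(i < s) X i w) / s%:R.

Definition iid {R : realType} {d : measure_display} {T : measurableType d}
    (P : probability T R) (X : nat -> {RV P >-> R}) : Prop :=
  (forall (s : seq nat) (B : nat -> set R), uniq s -> (forall i, measurable (B i)) ->
     P (\bigcap_(i in [set` s]) (X i @^-1` B i)) = (\prod_(i <- s) P (X i @^-1` B i))%E) /\
  (forall (i : nat) (B : set R), measurable B -> P (X i @^-1` B) = P (X 0%N @^-1` B)).

Arguments iid {R d T} P X.

(* K_n = floor( (1+eps)/d(mu_a,mu_1) * (log n + 3 log log n) ) ; the argument is
   positive for n >= 3, so truncn coincides with floor. *)
Definition Kn {R : realType} (mua mu1 eps : R) (n : nat) : nat :=
  Num.truncn ((1 + eps) / fine (kl mua mu1) * (ln n%:R + 3 * ln (ln n%:R))).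

(* Main.v *)
Require Import Defs.
From HB Require Import structures.
From mathcomp Require Import all_boot all_order all_algebra.
From mathcomp Require Import all_classical all_reals all_analysis.
From mathcomp Require Import ring lra.
Import Order.TTheory GRing.Theory Num.Theory.
Local Open Scope classical_set_scope.
Local Open Scope ring_scope.

Section RealPart.
Variable R : realType.
Implicit Types (x y q c z : R).

Definition H q y : R := y * ln (y / q) + (1 - y) * ln ((1 - y) / (1 - q)).

Lemma ln_le_sub1 z : 0 < z -> ln z <= z - 1.
Proof.
move=> z0; have := expR_ge1Dx (ln z); rewrite lnK ?posrE //; lra.
Qed.

Lemma ln_ge1V z : 0 < z -> 1 - z^-1 <= ln z.
Proof.
move=> z0; have zi : 0 < z^-1 by rewrite invr_gt0.
have := ln_le_sub1 _ zi.
rewrite lnV ?posrE //; lra.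
Qed.

Lemma lnF y q c : 0 <= y -> 0 < q -> 0 < c -> y * (1 + ln c) - c * q <= y * ln (y / q).
Proof.
move=> y0 q0 c0; have [->|yn0] := eqVneq y 0.
  rewrite !mul0r; have : 0 < c * q by apply: mulr_gt0. lra.
have yp : 0 < y by rewrite lt_neqAle eq_sym yn0.
have e : y / q = (y / (c * q)) * c.
  by field; rewrite !gt_eqF.
rewrite e lnM ?posrE ?divr_gt0 ?mulr_gt0 //.
have := ln_ge1V _ (divr_gt0 yp (mulr_gt0 c0 q0)).
rewrite invf_div => h.
have : y * (1 - c * q / y) <= y * ln (y / (c * q)) by rewrite ler_pM2l.
rewrite mulrBr mulr1 mulrCA mulfV ?gt_eqF // mulr1; lra.
Qed.


Lemma DV y q l : 0 <= y <= 1 -> 0 < q < 1 ->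
  l * y - ln (1 - q + q * expR l) <= H q y.
Proof.
move=> /andP[y0 y1] /andP[q0 q1].
set E := expR l; set Z := 1 - q + q * E.
have E0 : 0 < E by rewrite expR_gt0.
have qE : 0 < q * E by rewrite mulr_gt0.
have Z0 : 0 < Z by rewrite /Z; lra.
have c1 : 0 < E / Z by rewrite divr_gt0.
have c2 : 0 < Z^-1 by rewrite invr_gt0.
have h1 := lnF _ _ _ y0 q0 c1.
have y0' : 0 <= 1 - y by lra.
have q0' : 0 < 1 - q by lra.
have h2 := lnF _ _ _ y0' q0' c2.
rewrite ln_div ?posrE // expRK in h1.
rewrite lnV ?posrE // in h2.
have k : E / Z * q + Z^-1 * (1 - q) = 1.
  by rewrite /Z; field; rewrite -/Z gt_eqF.
rewrite /H; set L := ln Z in h1 h2 *.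
nra.
Qed.


Lemma Hpos mu q : 0 <= mu -> mu < q -> q < 1 -> 0 < H q mu.
Proof.
move=> m0 mq q1.
have q0 : 0 < q by lra.
set dl := (q - mu) / 2.
have dl0 : 0 < dl by rewrite /dl; lra.
have a1 : 0 <= mu <= 1 by apply/andP; split; lra.
have a2 : 0 < q < 1 by apply/andP; split; lra.
have h := DV _ _ (-dl) a1 a2.
set e := expR (- dl) in h.
have e0 : 0 < e by rewrite expR_gt0.
have ee : e * (1 + dl) <= 1.
  have := expR_ge1Dx dl; rewrite /e expRN => h1.
  rewrite -[leRHS](@mulVf _ (expR dl)) ?gt_eqF ?expR_gt0 //.
  by rewrite ler_pM2l // invr_gt0 expR_gt0.
have qe : 0 < q * e by rewrite mulr_gt0.
have Z0 : 0 < 1 - q + q * e by lra.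
have hl := ln_le_sub1 _ Z0.
have k : q * (1 - e) > dl * mu.
  have k1 : q * (1 - e) * (1 + dl) >= q * dl.
    have : q * (e * (1 + dl)) <= q * 1 by rewrite ler_pM2l.
    nra.
  have k2 : q * dl > dl * mu * (1 + dl).
    have : q > mu * (1 + dl) by rewrite /dl; nra.
    nra.
  have k3 : 0 < 1 + dl by lra.
  by rewrite -(ltr_pM2r k3); lra.
nra.
Qed.


Lemma exists_lambda mu q t : 0 <= mu -> mu < q -> q < 1 -> 0 <= t -> t < H q mu ->
  exists l, l <= 0 /\ t < l * mu - ln (1 - q + q * expR l).
Proof.
move=> m0 mq q1 t0 tH.
have q0 : 0 < q by lra.
have [mu0|mn0] := eqVneq mu 0.
  subst mu.
  move: tH; rewrite /H mul0r add0r subr0 mul1r.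
  rewrite ln_div ?posrE ?subr_gt0 // ln1 add0r => tH.
  have et : 1 - q < expR (- t).
    by rewrite -[1 - q]lnK ?posrE ?subr_gt0 // ltr_expR; lra.
  set v := (expR (- t) - 1 + q) / (2 * q).
  have v0 : 0 < v by rewrite /v divr_gt0 ?mulr_gt0 //; lra.
  exists (ln v); split.
    apply: ln_le0; rewrite /v ler_pdivrMr ?mulr_gt0 //.
    have : expR (- t) <= 1 by rewrite -expR0 ler_expR; lra.
    lra.
  rewrite mulr0 add0r lnK ?posrE //.
  have Zv : 1 - q + q * v = (1 - q + expR (- t)) / 2.
    by rewrite /v; field; rewrite gt_eqF.
  rewrite Zv; have Z0 : 0 < (1 - q + expR (-t)) / 2 by have := expR_gt0 (- t); lra.
  have : ln ((1 - q + expR (-t)) / 2) < ln (expR (-t)).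
    by rewrite ltr_ln ?posrE ?expR_gt0 //; lra.
  rewrite expRK; lra.
have mp : 0 < mu by rewrite lt_neqAle eq_sym mn0.
have m1 : mu < 1 by lra.
set a := ln (mu / q); set b := ln ((1 - mu) / (1 - q)).
have a0 : a < 0 by apply: ln_lt0; rewrite divr_gt0 // ltr_pdivrMr // mul1r mq.
have b0 : 0 < b by apply: ln_gt0; rewrite ltr_pdivlMr ?subr_gt0 // mul1r; lra.
exists (a - b); split; first lra.
have Z : 1 - q + q * expR (a - b) = ((1 - mu) / (1 - q))^-1.
  rewrite expRD expRN /a /b !lnK ?posrE ?divr_gt0 ?subr_gt0 //.
  by field; rewrite !gt_eqF ?subr_gt0.
rewrite Z lnV ?posrE ?divr_gt0 ?subr_gt0 // -/b.
move: tH; rewrite /H -/a -/b; nra.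
Qed.


Lemma choose_x mu q t : 0 <= mu -> mu < q -> q < 1 -> 0 <= t -> t < H q mu ->
  exists x, mu < x /\ x <= q /\ forall y, 0 <= y <= 1 -> y < x -> t <= H q y.
Proof.
move=> m0 mq q1 t0 tH.
have [l [l0 hl]] := exists_lambda _ _ _ m0 mq q1 t0 tH.
set L := ln (1 - q + q * expR l) in hl.
set w := (l * mu - L - t) / (1 - l).
have w0 : 0 < w by rewrite /w divr_gt0; lra.
have hw : w * (1 - l) = l * mu - L - t by rewrite /w; field; rewrite gt_eqF //; lra.
exists (Num.min (mu + w) q); split; first by rewrite lt_min mq; lra.
split; first by rewrite ge_min lexx orbT.
move=> y y01 yx.
have q0 : 0 < q < 1 by apply/andP; split; lra.
have := DV _ _ l y01 q0; rewrite -/L => h.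
move: yx; rewrite lt_min => /andP[yx _].
have : l * y >= l * (mu + w) by rewrite ler_wnM2l //; lra.
nra.
Qed.

End RealPart.
Arguments H {R}.
Arguments Hpos {R}.
Arguments choose_x {R}.

Lemma expR_conv (R : realType) (th l : R) : 0 <= th <= 1 ->
  expR (th * l) <= 1 + th * (expR l - 1).
Proof.
move=> /andP[t0 t1]; have := convex_expR (Itv01 t0 t1) l 0.
rewrite !convRE /= mulr0 addr0 expR0 mulr1 => h.
apply: le_trans h _; rewrite /unstable.onem; lra.
Qed.

Section Core.
Variables (R : realType) (d : measure_display) (T : measurableType d).
Variables (P : probability T R) (X : nat -> {RV P >-> R}).
Hypothesis hiid : iid P X.
Hypothesis h01 : forall i w, 0 <= X i w <= 1.
Variable mu : R.
Hypothesis hE : ('E_P[X 0%N] = mu%:E)%E.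
Hypothesis mu0 : 0 <= mu.
Variable m : nat.
Hypothesis m0 : (0 < m)%N.

Definition bin (k : nat) : set R := [set` `[k%:R / m%:R, k.+1%:R / m%:R[%R].

Lemma bin_meas k : measurable (bin k).
Proof. exact: measurable_itv. Qed.

Lemma mem_bin k y : bin k y <-> (k%:R / m%:R <= y < k.+1%:R / m%:R).
Proof. by rewrite /bin /= in_itv. Qed.

Let mR : 0 < (m%:R : R). Proof. by rewrite ltr0n. Qed.

Lemma bin_trunc y : 0 <= y -> bin (Num.truncn (y * m%:R)) y.
Proof.
move=> y0; apply/mem_bin.
have := truncn_itv (mulr_ge0 y0 (ltW mR)) => /andP[h1 h2].
by rewrite ler_pdivrMr // ltr_pdivlMr // h1 h2.
Qed.

Lemma bin_uniq k y : bin k y -> Num.truncn (y * m%:R) = k.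
Proof.
move/mem_bin => /andP[h1 h2]; apply: truncn_def.
by rewrite -ler_pdivrMr // -ltr_pdivlMr // h1 h2.
Qed.

Definition p k := fine (P (X 0%N @^-1` bin k)).

Lemma Pbin i k : P (X i @^-1` bin k) = (p k)%:E.
Proof.
rewrite hiid.2; last exact: bin_meas.
rewrite /p fineK //; apply: fin_num_measure.
exact: (measurable_funPTI (X 0%N) (bin_meas k)).
Qed.

Lemma p_ge0 k : 0 <= p k.
Proof. by rewrite -lee_fin -(Pbin 0). Qed.


Lemma sum_p (c : R) : 0 <= c ->
  \sum_(k < m.+1) p k * (1 + k%:R / m%:R * c) <= 1 + c * mu.
Proof.
move=> c0.
pose A k := X 0%N @^-1` bin k.
have mA k : measurable (A k) by exact: (measurable_funPTI (X 0%N) (bin_meas k)).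
pose a (k : 'I_m.+1) := 1 + k%:R / m%:R * c.
have a0 k : 0 <= a k.
  have : 0 <= k%:R / m%:R * c by rewrite mulr_ge0 ?divr_ge0.
  rewrite /a; lra.
have mX : measurable_fun setT (X 0%N) by exact: measurable_funPT.
have key w : \sum_(k < m.+1) \1_(A k) w * a k <= 1 + c * X 0%N w.
  have /andP[x0 x1] := h01 0%N w.
  have k0lt : (Num.truncn (X 0%N w * m%:R) < m.+1)%N.
    have : X 0%N w * m%:R <= m%:R by rewrite ler_piMl.
    by move=> h; rewrite ltnS truncn_le_nat; apply: le_lt_trans h _; rewrite ltr_nat.
  rewrite (bigD1 (Ordinal k0lt)) //= big1 ?addr0; last first.
    move=> k kne; rewrite indicE memNset ?mul0r //.
    move=> /bin_uniq hk; move: kne; apply/negP; rewrite negbK.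
    by apply/eqP; apply: val_inj; rewrite /= hk.
  rewrite indicE mem_set; last exact: bin_trunc.
  rewrite mul1r /a /=.
  have := truncn_itv (mulr_ge0 x0 (ltW mR)) => /andP[t1 _].
  have : (Num.truncn (X 0%N w * m%:R))%:R / m%:R <= X 0%N w by rewrite ler_pdivrMr.
  move=> h; rewrite lerD2l [c * _]mulrC ler_wpM2r //.
have h1 : (\int[P]_w (\sum_(k < m.+1) \1_(A k) w * a k)%:E =
     (\sum_(k < m.+1) p k * a k)%:E)%E.
  under eq_integral do rewrite -sumEFin.
  rewrite ge0_integral_sum //; last first.
    by move=> k w _; rewrite lee_fin mulr_ge0.
    move=> k; apply/measurable_realfun.measurable_EFinP; apply: measurable_realfun.measurable_funM => //.
  rewrite -sumEFin; apply: eq_bigr => k _.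
  under eq_integral do rewrite EFinM muleC.
  rewrite ge0_integralZl_EFin //; last first.
    by apply/measurable_realfun.measurable_EFinP; exact: measurable_realfun.measurable_indic.
  rewrite integral_indic // setIT /A.
  rewrite [X in (_ * X)%E](_ : _ = (p k)%:E); last exact: Pbin.
  by rewrite -EFinM mulrC.
have h2 : (\int[P]_w (1 + c * X 0%N w)%:E = (1 + c * mu)%:E)%E.
  under eq_integral do rewrite EFinD EFinM.
  rewrite ge0_integralD //; first last.
  - by apply: emeasurable_funM => //; apply/measurable_realfun.measurable_EFinP.
  - by move=> w _; rewrite -EFinM lee_fin mulr_ge0 //; case/andP: (h01 0%N w).
  rewrite integral_cst // [X in (_ * X + _)%E](_ : _ = 1%E); last exact: probability_setT.
  rewrite mul1e.
  rewrite ge0_integralZl_EFin //; last 2 first.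
  - by move=> w _; rewrite lee_fin; case/andP: (h01 0%N w).
  - by apply/measurable_realfun.measurable_EFinP.
  by rewrite -expectation_def hE.
rewrite -lee_fin -h2 -h1; apply: ge0_le_integral => //.
- by move=> w _; rewrite lee_fin sumr_ge0 // => k _; rewrite mulr_ge0.
- apply/measurable_realfun.measurable_EFinP; apply: measurable_sum => k.
  apply: measurable_realfun.measurable_funM => //; exact: measurable_realfun.measurable_indic.
- apply/measurable_realfun.measurable_EFinP.
  by apply: measurable_realfun.measurable_funD => //; apply: measurable_realfun.measurable_funM.
- by move=> w _; rewrite lee_fin key.
Qed.


Variable s : nat.
Definition gf (f : {ffun 'I_s -> 'I_m.+1}) (i : nat) : nat :=
  oapp (fun j : 'I_s => nat_of_ord (f j)) 0%N (insub i).
Definition Aset (f : {ffun 'I_s -> 'I_m.+1}) : set T :=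
  \bigcap_(i in [set` iota 0 s]) (X i @^-1` bin (gf f i)).

Lemma Aset_meas f : measurable (Aset f).
Proof.
apply: bigcap_measurableType => i _.
exact: (measurable_funPTI (X i) (bin_meas _)).
Qed.

Lemma P_Aset f : P (Aset f) = (\prod_(j < s) p (f j))%:E.
Proof.
have h := hiid.1 (iota 0 s) (fun i => bin (gf f i)) (iota_uniq 0 s) (fun i => bin_meas _).
transitivity (\prod_(i <- iota 0 s) P (X i @^-1` bin (gf f i)))%E; first exact: h.
have -> : iota 0 s = index_iota 0 s by rewrite /index_iota subn0.
rewrite big_mkord -prodEFin; apply: eq_bigr => j _.
by rewrite /gf valK /= Pbin.
Qed.


Definition good (x : R) (f : {ffun 'I_s -> 'I_m.+1}) : bool :=
  s%:R * x <= \sum_(j < s) (f j).+1%:R / m%:R.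

Lemma Fmeas (x : R) : measurable [set w | s%:R * x <= \sum_(i < s) X i w].
Proof.
have mf : measurable_fun setT (fun w => \sum_(i < s) X i w).
  by apply: measurable_sum => i; exact: measurable_funPT.
have := mf measurableT _ (measurable_itv `[s%:R * x, +oo[%R).
rewrite setTI; congr measurable; apply/seteqP; split => w /=; rewrite in_itv /= andbT //.
Qed.

Lemma union_bound (x : R) :
  (P [set w | (s%:R * x <= \sum_(i < s) X i w)%R] <=
  \sum_(f : {ffun 'I_s -> 'I_m.+1}) (if good x f then P (Aset f) else 0))%E.
Proof.
pose A' f := if good x f then Aset f else set0.
pose N := #|{ffun 'I_s -> 'I_m.+1}|.
pose G k := oapp (fun i : 'I_N => A' (enum_val i)) set0 (insub k).
have -> : (\sum_(f : {ffun 'I_s -> 'I_m.+1}) (if good x f then P (Aset f) else 0) =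
    \sum_(k < N) P (G k))%E.
  symmetry.
  transitivity (\sum_(k < N) (fun f => if good x f then P (Aset f) else 0) (enum_val k))%E.
    apply: eq_bigr => k _; rewrite /G valK /= /A'.
    by case: ifP => // _; rewrite measure0.
  by rewrite /N -(big_enum_val (A := {ffun 'I_s -> 'I_m.+1}) (fun f => if good x f then P (Aset f) else 0%E)).
apply: content_subadditive.
- move=> k _; rewrite /G; case: insub => [i|] /=; last exact: measurable0.
  rewrite /A'; case: ifP => _; [exact: Aset_meas | exact: measurable0].
- exact: Fmeas.
move=> w /= hw; rewrite -bigcup_mkord.
have hX j : 0 <= X j w * m%:R by rewrite mulr_ge0 //; case/andP: (h01 j w).
have tlt j : (Num.truncn (X j w * m%:R) < m.+1)%N.
  have /andP[_ x1] := h01 j w.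
  have : X j w * m%:R <= m%:R by rewrite ler_piMl.
  by move=> h; rewrite ltnS truncn_le_nat; apply: le_lt_trans h _; rewrite ltr_nat.
pose fw := [ffun j : 'I_s => Ordinal (tlt j)].
exists (val (enum_rank fw)); first exact: ltn_ord.
rewrite /G valK /= enum_rankK /A'.
have gw : good x fw.
  rewrite /good; apply: le_trans hw _; apply: ler_sum => j _.
  rewrite ffunE /=.
  have := truncn_itv (hX j) => /andP[_ h2].
  by rewrite ler_pdivlMr // ltW.
rewrite gw => i /= hi.
have ilt : (i < s)%N by move: hi; rewrite mem_iota add0n.
rewrite /gf (_ : i = val (Ordinal ilt)) // valK /= ffunE /=.
apply: bin_trunc; by case/andP: (h01 i w).
Qed.


Lemma core_bound (x l : R) : 0 <= l ->
  (P [set w | (s%:R * x <= \sum_(i < s) X i w)%R] <=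
   ((expR (- l * x) * expR (l / m%:R) * (1 + (expR l - 1) * mu)) ^+ s)%:E)%E.
Proof.
move=> l0.
apply: le_trans (union_bound x) _.
pose W (f : {ffun 'I_s -> 'I_m.+1}) :=
  (\prod_(j < s) (p (f j) * expR (l * ((f j).+1%:R / m%:R)))) * expR (- l * (s%:R * x)).
have W0 f : 0 <= W f.
  by rewrite /W mulr_ge0 ?expR_ge0 // prodr_ge0 // => j _; rewrite mulr_ge0 ?p_ge0 ?expR_ge0.
apply: (@le_trans _ _ (\sum_(f : {ffun 'I_s -> 'I_m.+1}) (W f)%:E)%E).
  apply: lee_sum => f _; case: ifP => g; last by rewrite lee_fin.
  rewrite P_Aset lee_fin /W big_split /= -expR_sum -mulrA -expRD.
  apply: ler_peMr; first by apply: prodr_ge0 => j _; exact: p_ge0.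
  have hg : s%:R * x <= \sum_(j < s) (f j).+1%:R / m%:R := g.
  apply: le_trans (expR_ge1Dx _); rewrite lerDl -mulr_sumr mulNr -mulrBr mulr_ge0 //.
  by rewrite subr_ge0.
rewrite sumEFin lee_fin /W -mulr_suml.
rewrite -(bigA_distr_bigA (fun (j : 'I_s) (k : 'I_m.+1) => p k * expR (l * (k.+1%:R / m%:R)))).
rewrite prodr_const card_ord.
have el : 0 <= expR l - 1 by have := expR_ge1Dx l; lra.
have hS : \sum_(k < m.+1) p k * expR (l * (k.+1%:R / m%:R)) <=
    expR (l / m%:R) * (1 + (expR l - 1) * mu).
  apply: (@le_trans _ _ (expR (l / m%:R) *
     \sum_(k < m.+1) p k * (1 + k%:R / m%:R * (expR l - 1)))); last first.
    by apply: ler_wpM2l; [exact: expR_ge0 | exact: sum_p].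
  rewrite mulr_sumr; apply: ler_sum => k _.
  have -> : l * (k.+1%:R / m%:R) = l / m%:R + k%:R / m%:R * l.
    by rewrite -addn1 natrD; field; rewrite gt_eqF.
  rewrite expRD mulrCA; apply: ler_wpM2l; first exact: expR_ge0.
  apply: ler_wpM2l; first exact: p_ge0.
  apply: expR_conv; rewrite divr_ge0 //= ler_pdivrMr // mul1r ler_nat.
  by rewrite -ltnS.
have -> : - l * (s%:R * x) = s%:R * (- l * x) by ring.
rewrite expRM_natl -exprMn; apply: lerXn2r.
- by rewrite nnegrE mulr_ge0 ?expR_ge0 // sumr_ge0 // => k _; rewrite mulr_ge0 ?p_ge0 ?expR_ge0.
- have B0 : 0 <= 1 + (expR l - 1) * mu.
    have := mulr_ge0 el mu0; lra.
  by rewrite nnegrE !mulr_ge0 ?expR_ge0.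
rewrite mulrC -mulrA; apply: ler_wpM2l; first exact: expR_ge0.
exact: hS.
Qed.

End Core.

Lemma my_chernoff (R : realType) (mu x : R) : 0 <= mu -> mu < x -> x <= 1 ->
  exists rho : R, 0 < rho < 1 /\
  forall d (T : measurableType d) (P : probability T R) (X : nat -> {RV P >-> R}),
   iid P X -> (forall i w, 0 <= X i w <= 1) -> ('E_P[X 0%N] = mu%:E)%E ->
   forall s : nat, (P [set w | (s%:R * x <= \sum_(i < s) X i w)%R] <= (rho ^+ s)%:E)%E.
Proof.
move=> mu0 mx x1.
set m := (Num.truncn (2 / (x - mu))).+1.
have mR : 0 < (m%:R : R) by rewrite ltr0n.
have hm : 1 / m%:R < (x - mu) / 2.
  have := truncnS_gt (2 / (x - mu)); rewrite -/m => h.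
  rewrite ltr_pdivrMr // mulrC -ltr_pdivrMr ?divr_gt0 //; last lra.
  by rewrite div1r invf_div.
set x' := x - 1 / m%:R.
set dl := x' - mu.
have dl0 : 0 < dl by rewrite /dl /x'; lra.
set l := Num.min (1 / 2 : R) (dl / 4).
have l0 : 0 < l by rewrite /l lt_min; apply/andP; split; lra.
have l2 : l <= 1 / 2 by rewrite /l ge_min lexx.
have l4 : l <= dl / 4 by rewrite /l ge_min lexx orbT.
set B := 1 + (expR l - 1) * mu.
have el : expR l * (1 - l) <= 1.
  have := expR_ge1Dx (- l); rewrite expRN => h.
  have e0 := expR_gt0 l.
  by rewrite -[leRHS](mulfV (lt0r_neq0 e0)) ler_pM2l.
have hB : B < 1 + l * x'.
  have e1 : expR l - 1 <= l * (1 + 2 * l).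
    have h1 : (expR l - 1) * (1 - l) <= l * (1 + 2 * l) * (1 - l).
      have : l * l * (1 - 2 * l) >= 0 by rewrite mulr_ge0 ?mulr_ge0 //; lra.
      nra.
    by rewrite ler_pM2r in h1 => //; lra.
  have : (expR l - 1) * mu <= l * (1 + 2 * l) * mu by rewrite ler_wpM2r.
  have k1 : l * l * mu <= l * l by rewrite ler_piMr ?mulr_ge0 //; lra.
  have k2 : 2 * (l * l) <= l * (dl / 2).
    have : 2 * l <= dl / 2 by lra.
    move=> h2; have := ler_wpM2l (ltW l0) h2; lra.
  have k3 : l * (dl / 2) < l * dl by rewrite ltr_pM2l //; lra.
  have e2 : x' = dl + mu by rewrite /dl; lra.
  rewrite /B e2; nra.
have hB2 : B < expR (l * x') by apply: lt_le_trans hB (expR_ge1Dx _).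
exists (expR (- l * x) * expR (l / m%:R) * B); split.
  have e1 := expR_ge1Dx l.
  have B0 : 0 < B by rewrite /B; nra.
  apply/andP; split; first by rewrite !mulr_gt0 ?expR_gt0.
  rewrite -expRD; have -> : - l * x + l / m%:R = - (l * x') by rewrite /x'; field; rewrite gt_eqF.
  rewrite expRN mulrC ltr_pdivrMr ?expR_gt0 // mul1r //.
move=> d T P X hiid h01 hE s.
exact: (core_bound _ _ _ _ _ hiid h01 _ hE mu0 m (ltn0Sn _) s x l (ltW l0)).
Qed.

Lemma xlogxy_E (R : realType) (a b : R) : b != 0 -> xlogxy a b = (a * ln (a / b))%:E.
Proof.
move=> b0; rewrite /xlogxy (negbTE b0).
by case: ifP => // /eqP ->; rewrite mul0r.
Qed.

Lemma kl_H (R : realType) (p q : R) : 0 < q < 1 -> kl p q = (H q p)%:E.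
Proof.
move=> /andP[q0 q1]; rewrite /kl !xlogxy_E ?gt_eqF ?subr_gt0 //.
Qed.

Lemma klplus_H (R : realType) (y q : R) : 0 < q < 1 ->
  klplus y q = (if y < q then H q y else 0)%:E.
Proof. by move=> hq; rewrite /klplus kl_H //; case: ifP. Qed.

Lemma event_sub (R : realType) d (T : measurableType d) (P : probability T R)
  (X : nat -> {RV P >-> R}) (q x t : R) (s : nat) :
  (forall i w, 0 <= X i w <= 1) -> 0 < q < 1 -> x <= q ->
  (forall y, 0 <= y <= 1 -> y < x -> t <= H q y) ->
  [set w | (klplus (emp_mean X s w) q < t%:E)%E] `<=`
  [set w | s%:R * x <= \sum_(i < s) X i w].
Proof.
move=> h01 hq xq hx w /=; rewrite klplus_H // lte_fin => h.
set M := emp_mean X s w.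
have S0 : 0 <= \sum_(i < s) X i w by apply: sumr_ge0 => i _; case/andP: (h01 i w).
have S1 : \sum_(i < s) X i w <= s%:R.
  have : \sum_(i < s) X i w <= \sum_(i < s) (1:R).
    by apply: ler_sum => i _; case/andP: (h01 i w).
  by rewrite sumr_const card_ord.
have M01 : 0 <= M <= 1.
  rewrite /M /emp_mean divr_ge0 //=.
  case: s S1 {S0 M h} => [|s] S1; first by rewrite invr0 mulr0.
  by rewrite ler_pdivrMr ?ltr0n // mul1r.
have Mx : x <= M.
  rewrite leNgt; apply/negP => Mlt.
  have := hx M M01 Mlt; move: h; rewrite (lt_le_trans Mlt xq); lra.
move: Mx; rewrite /M /emp_mean; clear M01 M h S0 S1.
case: s => [|s] Mx; first by rewrite big_ord0 mul0r.
by move: Mx; rewrite ler_pdivlMr ?ltr0n // mulrC.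
Qed.

Lemma event_meas (R : realType) d (T : measurableType d) (P : probability T R)
  (X : nat -> {RV P >-> R}) (q t : R) (s : nat) : 0 < q < 1 ->
  measurable [set w | (klplus (emp_mean X s w) q < t%:E)%E].
Proof.
move=> hq.
pose g := fun y : R => if y < q then H q y else 0.
have mg : measurable_fun setT g.
  apply: measurable_fun_ifT.
  - by apply: measurable_realfun.measurable_fun_ltr.
  - rewrite /H; apply: measurable_realfun.measurable_funD.
      apply: measurable_realfun.measurable_funM => //.
      apply: measurableT_comp; first exact: measurable_realfun.measurable_ln.
      exact: measurable_realfun.measurable_funM.
    apply: measurable_realfun.measurable_funM => //.
      exact: measurable_realfun.measurable_funB.
    apply: measurableT_comp; first exact: measurable_realfun.measurable_ln.
    apply: measurable_realfun.measurable_funM => //.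
    exact: measurable_realfun.measurable_funB.
  - exact: measurable_cst.
have mM : measurable_fun setT (emp_mean X s).
  rewrite /emp_mean; apply: measurable_realfun.measurable_funM => //.
  by apply: measurable_sum => i; exact: measurable_funPT.
have := (measurableT_comp mg mM) measurableT _ (measurable_itv `]-oo, t[%R).
rewrite setTI; congr measurable; apply/seteqP; split => w /=;
  by rewrite in_itv /= klplus_H // lte_fin.
Qed.

Theorem lemma3 (R : realType) (mua mu1 : R) :
  mua < mu1 -> mu1 < 1 ->
  forall eps : R, 0 < eps ->
  exists C2 beta : R, 0 < C2 /\ 0 < beta /\
  forall (d : measure_display) (T : measurableType d) (P : probability T R)
         (X : nat -> {RV P >-> R}),
    iid P X ->
    (forall i w, 0 <= X i w <= 1) ->
    ('E_P[X 0%N] = mua%:E)%E ->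
    forall n : nat, (3 <= n)%N ->
      (\sum_((Kn mua mu1 eps n).+1 <= s <oo)
         P [set w | klplus (emp_mean X s w) mu1 < kl mua mu1 * ((1 + eps)^-1)%:E]
       <= (C2 / n%:R `^ beta)%:E)%E.
Proof.
move=> mq q1 eps e0.
have [mlt0|mge0] := ltP mua 0.
  exists 1, 1; split; first lra; split; first lra.
  move=> d T P X _ h01 hE n _; exfalso.
  have hx : forall w, 0 <= X 0%N w by move=> w; case/andP: (h01 0%N w).
  have := expectation_ge0 P hx; rewrite hE lee_fin; lra.
have q0 : 0 < mu1 by lra.
have hq : 0 < mu1 < 1 by apply/andP.
set D := H mu1 mua.
have D0 : 0 < D := Hpos mua mu1 mge0 mq q1.
set t := D / (1 + eps).
have t0 : 0 <= t by rewrite divr_ge0 //; lra.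
have tD : t < D.
  rewrite /t ltr_pdivrMr; last lra.
  rewrite ltr_pMr //; lra.
have [x [mx [xq hx]]] := choose_x mua mu1 t mge0 mq q1 t0 tD.
have x1 : x <= 1 by lra.
have [rho [/andP[r0 r1] hrho]] := my_chernoff _ _ _ mge0 mx x1.
set A := (1 + eps) / D.
have A0 : 0 < A by rewrite divr_gt0 //; lra.
set c0 := ln (ln (3%:R : R)).
have lr : ln rho < 0 by apply: ln_lt0; apply/andP.
exists (expR (3 * A * c0 * ln rho) / (1 - rho)), (- A * ln rho).
split; first by rewrite divr_gt0 ?expR_gt0 // subr_gt0.
split; first by rewrite mulNr oppr_gt0 pmulr_rlt0.
move=> d T P X hiid h01 hE n n3.
have klE : kl mua mu1 = D%:E by rewrite kl_H.
rewrite klE -EFinM -/t.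
set K := Kn mua mu1 eps n.
apply: (@le_trans _ _ (\sum_(K.+1 <= s <oo) (rho ^+ s)%:E)%E).
  apply: lee_nneseries => [s _ _ | s _]; first exact: measure_ge0.
  apply: le_trans (hrho d T P X hiid h01 hE s).
  apply: le_measure; rewrite ?inE.
  - exact: event_meas.
  - exact: Fmeas.
  - exact: event_sub.
have geo : (\sum_(K.+1 <= s <oo) (rho ^+ s)%:E <= (rho ^+ K.+1 / (1 - rho))%:E)%E.
  apply: lime_le.
    by apply: is_cvg_nneseries => i _ _; rewrite lee_fin exprn_ge0 // ltW.
  apply: nearW => N; rewrite sumEFin lee_fin.
  have r1' : 0 < 1 - rho by lra.
  case: (leqP N K.+1) => hN.
    by rewrite big_geq // divr_ge0 ?exprn_ge0 // ltW.
  rewrite -(subnKC (ltnW hN)) geometric_partial_tail.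
  apply: geometric_le_lim; rewrite ?exprn_ge0 ?ltW //.
  by rewrite ger0_norm ?ltW.
apply: le_trans geo _; rewrite lee_fin.
have n0 : (0 < n)%N by apply: leq_trans n3.
have nR : (3%:R : R) <= n%:R by rewrite ler_nat.
have l3 : 0 < ln (3%:R : R) by apply: ln_gt0; rewrite ltr1n.
have ln3 : ln (3%:R : R) <= ln n%:R by rewrite ler_ln ?posrE ?ltr0n.
have lln : c0 <= ln (ln n%:R) by rewrite /c0 ler_ln ?posrE //; lra.
have KA : A * (ln n%:R + 3 * c0) <= K.+1%:R.
  have h := truncnS_gt (A * (ln n%:R + 3 * ln (ln n%:R))).
  have eK : K = Num.truncn (A * (ln n%:R + 3 * ln (ln n%:R))) by rewrite /K /Kn klE.
  rewrite eK; apply: le_trans (ltW h); rewrite ler_pM2l //; lra.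
have nP : (0:R) < n%:R by rewrite ltr0n.
rewrite /powR (negbTE (lt0r_neq0 nP)).
have r2 : 0 < (1 - rho)^-1 by rewrite invr_gt0; lra.
rewrite mulrAC ler_pM2r //.
have eR : rho ^+ K.+1 = expR (K.+1%:R * ln rho) by rewrite expRM_natl lnK // posrE.
rewrite eR -expRN -expRD ler_expR.
have h := ler_wnM2r (ltW lr) KA.
apply: (le_trans h).
rewrite [X in _ <= X](_ : _ = A * (ln n%:R + 3 * c0) * ln rho) //; ring.
Qed.
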